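(* Let $n\ge2$, $d\ge1$ with $\gcd(n,d)=1$, and let $\ell,\ell'\in\mathrm{Dyck}_{d,n}$. Then for every $2\le i\le n+d$ the relation $\bar\ell\,R\,r^i(\bar{\ell'})$ does not hold (in $L_{d+1,n}$).
   Context: $L_{a,b}$ is the set of lattice paths from $(0,0)$ to $(a,b)$ made of unit horizontal $(1,0)$ and vertical $(0,1)$ steps. $\mathrm{Dyck}_{d,n}$ is the set of $\ell\in L_{d,n}$ all of whose lattice points $(x,y)$ satisfy $y\le\frac nd x$. For $\ell\in L_{d,n}$, $\bar\ell\in L_{d+1,n}$ is obtained by adding a horizontal step at the beginning. For $p\in L_{d+1,n}$, $r(p)$ is obtained by moving the first step of $p$ to the end. For $p_1,p_2\in L_{d+1,n}$: $p_1\le p_2$ means $p_1$ lies weakly below $p_2$; $Y_p$ is the region of the $(d+1)\times n$ rectangle between $p$ and the right and bottom sides; $p_1\,R\,p_2$ iff $p_1\le p_2$ and no lattice-aligned rectangle of width $2$ and height $1$ fits inside $Y_{p_2}\setminus Y_{p_1}$. *)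

(* Defs.v *)
From mathcomp Require Import all_boot.
Set Implicit Arguments. Unset Strict Implicit. Unset Printing Implicit Defensive.

(* A lattice path is a sequence of unit steps:
   false = horizontal step (1,0), true = vertical step (0,1). *)
Definition hstep : bool := false.
Definition vstep : bool := true.

Definition is_lpath (a b : nat) (p : seq bool) : bool :=
  (count_mem hstep p == a) && (count_mem vstep p == b).

Definition lpoint (p : seq bool) (k : nat) : nat * nat :=
  (count_mem hstep (take k p), count_mem vstep (take k p)).

(* Dyck_{d,n}: paths in L_{d,n} all of whose lattice points (x,y) satisfy
   y <= (n/d) x, i.e. y * d <= n * x. *)
Definition is_dyck (d n : nat) (p : seq bool) : Prop :=
  is_lpath d n p /\
  forall k, k <= size p -> (lpoint p k).2 * d <= n * (lpoint p k).1.

Definition lbar (p : seq bool) : seq bool := hstep :: p.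

Definition rstep (p : seq bool) : seq bool :=
  match p with [::] => [::] | s :: q => rcons q s end.

(* hgt p x = y-coordinate of the horizontal step of p from abscissa x to x+1
   (the number of vertical steps preceding the (x+1)-th horizontal step). *)
Fixpoint hgt (p : seq bool) (x : nat) : nat :=
  match p with
  | [::] => 0
  | s :: q => if s then (hgt q x).+1
              else if x is x'.+1 then hgt q x' else 0
  end.

(* Y_p (inside the a x b rectangle): the set of unit cells [x,x+1]x[y,y+1]
   lying between p and the right and bottom sides of the rectangle. *)
Definition Yreg (a b : nat) (p : seq bool) (x y : nat) : bool :=
  [&& x < a, y < b & y < hgt p x].

(* p1 <= p2 : p1 lies weakly below p2 (region below p1 contained in region
   below p2). *)
Definition path_le (a b : nat) (p1 p2 : seq bool) : Prop :=
  forall x y, Yreg a b p1 x y -> Yreg a b p2 x y.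

(* p1 R p2 : p1 <= p2 and no lattice-aligned rectangle of width 2 and
   height 1 fits inside Y_{p2} \ Y_{p1}. *)
Definition relR (a b : nat) (p1 p2 : seq bool) : Prop :=
  path_le a b p1 p2 /\
  ~ (exists x y,
       [&& Yreg a b p2 x y, ~~ Yreg a b p1 x y,
           Yreg a b p2 x.+1 y & ~~ Yreg a b p1 x.+1 y]).

(* Main.v *)
Require Import Defs.
From mathcomp Require Import all_boot.
From mathcomp Require Import zify.

Lemma hgt_cat (S P : seq bool) x : count_mem false S <= x ->
  hgt (S ++ P) x = count_mem true S + hgt P (x - count_mem false S).
Proof.
elim: S x => [|s S IH] x /=; first by rewrite subn0.
case: s => /= Hx; rewrite ?add0n in Hx *.
  by rewrite IH //; lia.
case: x Hx => [|x] Hx; first lia.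
rewrite IH; last by move: Hx; rewrite add1n ltnS.
by congr (_ + hgt P _); rewrite add1n subSS.
Qed.

Lemma hgt_point (p : seq bool) x : x < count_mem false p ->
  exists k, k <= size p /\ lpoint p k = (x, hgt p x).
Proof.
elim: p x => [|s p IH] x /=; first by [].
case: s => /= Hx.
  rewrite add0n in Hx.
  have [k [Hk Hp]] := IH x Hx.
  exists k.+1; split; first by [].
  move: Hp; rewrite /lpoint /= => -[-> ->]. by [].
case: x Hx => [|x] Hx.
  by exists 0.
rewrite add1n ltnS in Hx.
have [k [Hk Hp]] := IH x Hx.
exists k.+1; split; first by [].
move: Hp; rewrite /lpoint /= => -[-> ->]. by [].
Qed.

Lemma dyck_hgt d n (l : seq bool) x : is_dyck d n l -> x < d -> hgt l x * d <= n * x.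
Proof.
move=> [/andP [/eqP Hc _] H] Hx.
have [k [Hk Hp]] := @hgt_point l x ltac:(rewrite Hc; exact Hx).
by have := H k Hk; rewrite Hp.
Qed.

Lemma size_counts (p : seq bool) : size p = count_mem true p + count_mem false p.
Proof. elim: p => [|[] p IH] //=; by rewrite IH ?add1n ?add0n ?addnS ?addSn. Qed.

Lemma rstep_rot (p : seq bool) : rstep p = rot 1 p.
Proof. case: p => [|s p] //=. by rewrite /rot /= drop0 take0 cats1. Qed.

Lemma iter_rot i (p : seq bool) : i <= size p -> iter i rstep p = rot i p.
Proof.
elim: i => [|i IH] Hi /=; first by rewrite rot0.
by rewrite IH ?rstep_rot -?rotD //; lia.
Qed.

Theorem proposition4p18 (n d : nat) :
  2 <= n -> 1 <= d -> coprime n d ->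
  forall l l' : seq bool, is_dyck d n l -> is_dyck d n l' ->
  forall i, 2 <= i <= n + d ->
  ~ relR d.+1 n (lbar l) (iter i rstep (lbar l')).
Proof.
move=> Hn Hd Hco l l' Hl Hl' i /andP [Hi1 Hi2] [_ HR]; apply: HR.
have Hl'c := Hl'.1; move/andP: Hl'c; rewrite /hstep /vstep => -[/eqP Hf' /eqP Ht'].
have Hlc := Hl.1; move/andP: Hlc; rewrite /hstep /vstep => -[/eqP Hf /eqP Ht].
have Hsz' : size l' = n + d by rewrite size_counts; lia.
have Hq : iter i rstep (lbar l') = drop i (lbar l') ++ take i (lbar l').
  by rewrite iter_rot /= ?Hsz' //; lia.
set x' := count_mem false (take i.-1 l').
set y' := count_mem true (take i.-1 l').
have Hpt := Hl'.2 i.-1 ltac:(lia).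
rewrite /lpoint /hstep /vstep /= -/x' -/y' in Hpt.
have Hszt : size (take i.-1 l') = i.-1 by rewrite size_take Hsz'; case: ifP; lia.
have Hxy : x' + y' = i.-1 by rewrite /x' /y' addnC -size_counts.
have Hx'le : x' <= d.
  by rewrite -Hf' -(cat_take_drop i.-1 l') count_cat /x'; lia.
have Hy'le : y' <= n.
  by rewrite -Ht' -(cat_take_drop i.-1 l') count_cat /y'; lia.
have Hstrict : y' * d < n * x'.
  rewrite ltn_neqAle Hpt andbT; apply/eqP => Heq.
  have Hdv : n %| y'.
    by rewrite -(Gauss_dvdl y' Hco) Heq dvdn_mulr.
  have [Hy0|Hyn] : y' = 0 \/ y' = n.
    case: (posnP y') => Hy; first by left.
    right; apply/eqP; rewrite eqn_leq Hy'le /=; exact: dvdn_leq.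
  - rewrite Hy0 mul0n in Heq.
    have Hx0 : x' = 0.
      move/esym/eqP: Heq; rewrite muln_eq0 => /orP [/eqP H|/eqP H] //.
      by rewrite H in Hn.
    lia.
  - rewrite Hyn in Heq.
    have Hxd : x' = d.
      apply/eqP; rewrite -(@eqn_pmul2l n); last by apply: leq_trans Hn.
      by rewrite -Heq.
    lia.
have Hyn : y' < n.
  case: (ltnP y' n) => // Hge.
  have Hy : y' = n by lia.
  rewrite Hy in Hstrict.
  have : n * d < n * d.
    apply: (leq_trans Hstrict). by rewrite leq_mul2l Hx'le orbT.
  by rewrite ltnn.
have Hx1 : 1 <= x'.
  case: (posnP x') => // Hx0; rewrite Hx0 muln0 in Hstrict; lia.
have HPg : forall j, 0 < j -> take j (lbar l') = false :: take j.-1 l' by case.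
set S := drop i (lbar l'); set P := take i (lbar l').
have HP : P = false :: take i.-1 l' by rewrite /P HPg //; lia.
have HSf : count_mem false S = d - x'.
  have := count_cat (pred1 false) P S.
  rewrite /S /P cat_take_drop -/S -/P HP /= Hf' -/x'. lia.
have HSt : count_mem true S = n - y'.
  have := count_cat (pred1 true) P S.
  rewrite /S /P cat_take_drop -/S -/P HP /= Ht' -/y'. lia.
have Hkey : forall x, x <= (d - x').+1 -> hgt (lbar l) x <= n - y' - 1.
  move=> x Hx; case: x Hx => [|x] Hx /=; first lia.
  have Hb := @dyck_hgt d n l x Hl ltac:(lia).
  have : hgt l x * d < (n - y') * d.
    apply: (leq_ltn_trans Hb).
    apply: (@leq_ltn_trans (n * (d - x'))); first by rewrite leq_mul2l; lia.
    have H1 : y' * d <= n * d by rewrite leq_mul2r; lia.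
    have H2 : n * x' <= n * d by rewrite leq_mul2l; lia.
    rewrite mulnBr mulnBl; lia.
  rewrite ltn_mul2r; lia.
exists (d - x'), (n - y' - 1).
have K1 := Hkey (d - x') ltac:(lia).
have K2 := Hkey (d - x').+1 ltac:(lia).
rewrite Hq /Yreg.
rewrite !hgt_cat ?HSf ?HSt; try lia.
Qed.
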